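(* Let $R_1,R_2,R_3$ be mutually orthogonal unit vectors in $\mathbb{R}^3$, $w_1,w_2,w_3\ge0$, $\nu_1,\nu_2,\nu_3$ Borel probability measures on $[-1,1]$, $\hat I=\sum_{i=1}^3w_iA_{R_i,\nu_i}$, and $E^0=\int d\hat I$, $E^1=\int\Omega\,d\hat I$, $E^2=\int\Omega\otimes\Omega\,d\hat I$. Let $\lambda_i=R_i^TE^2R_i$ and $F_i=E^1\cdot R_i$. Assume $\lambda_i>0$ for $i=1,2,3$ and \[ \frac{F_1^2}{\lambda_1}+\frac{F_2^2}{\lambda_2}+\frac{F_3^2}{\lambda_3}=E^0. \] Then at least one of the following holds: (1) there is $i$ with $\lambda_i=F_i^2/E^0$, and for the two other indices $j,k$ one has $\lambda_j=\lambda_k$ and $F_j=F_k=0$; (2) $|F_j|=\lambda_j$ for all $j=1,2,3$.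
   Context: For a unit vector $R\in\mathbb{R}^3$ and a finite Borel measure $\nu$ on $[-1,1]$, $A_{R,\nu}$ denotes the axisymmetric measure on the unit sphere $\mathbb{S}^2$ defined by $\int\varphi\,dA_{R,\nu}=\frac{1}{2\pi}\int_{-1}^1\int_0^{2\pi}\varphi\big(\mu R+\sqrt{1-\mu^2}(\cos\theta\,P+\sin\theta\,Q)\big)\,d\theta\,d\nu(\mu)$ for continuous $\varphi$, where $(P,Q,R)$ is any orthonormal basis. If $\nu$ has density $f$, then $A_{R,\nu}$ has density $\frac{1}{2\pi}f(\Omega\cdot R)$ with respect to surface measure. *)

(* Defs.v *)
From Stdlib Require Import Reals Lra ClassicalEpsilon.
Open Scope R_scope.

Definition sigma_algebra (S : (R -> Prop) -> Prop) : Prop :=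
  S (fun _ => False) /\
  (forall A, S A -> S (fun x => ~ A x)) /\
  (forall A : nat -> R -> Prop, (forall n, S (A n)) -> S (fun x => exists n, A n x)).

Definition borel (A : R -> Prop) : Prop :=
  forall S, sigma_algebra S -> (forall a b, S (fun x => a < x < b)) -> S A.

Record prob_meas_11 (nu : (R -> Prop) -> R) : Prop := {
  pm_nonneg : forall A, borel A -> 0 <= nu A;
  pm_ctbl_add : forall A : nat -> R -> Prop,
      (forall n, borel (A n)) ->
      (forall n m x, n <> m -> A n x -> A m x -> False) ->
      infinite_sum (fun n => nu (A n)) (nu (fun x => exists n, A n x));
  pm_support : nu (fun x => x < -1 \/ 1 < x) = 0;
  pm_total : nu (fun _ => True) = 1 }.

(* Riemann integral of f over [a,b] (when it exists; a fixed junk value otherwise) *)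
Definition rint (f : R -> R) (a b : R) : R :=
  epsilon (inhabits 0)
    (fun v => exists pr : Riemann_integrable f a b, RiemannInt pr = v).

(* Lebesgue integral of a bounded (Borel) function g against nu on [-1,1],
   via the layer-cake formula  int g dnu = int_0^M nu{g>t} dt - int_0^M nu{g<-t} dt
   for any bound M of |g| on [-1,1]. *)
Definition pm_int (nu : (R -> Prop) -> R) (g : R -> R) : R :=
  epsilon (inhabits 0)
    (fun v => exists M, 0 <= M /\ (forall x, -1 <= x <= 1 -> Rabs (g x) <= M) /\
       v = rint (fun t => nu (fun x => -1 <= x <= 1 /\ t < g x)) 0 M
         - rint (fun t => nu (fun x => -1 <= x <= 1 /\ g x < - t)) 0 M).

Definition vec3 := nat -> R.
Definition dot (u v : vec3) : R := u 0%nat * v 0%nat + u 1%nat * v 1%nat + u 2%nat * v 2%nat.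

(* ---------- axisymmetric measure A_{R,nu} as a functional on phi ----------
   (P,Q,R) must be an orthonormal basis. *)
Definition axisym_int (Rv P Q : vec3) (nu : (R -> Prop) -> R) (phi : vec3 -> R) : R :=
  pm_int nu (fun mu =>
    / (2 * PI) *
    rint (fun th => phi (fun k => mu * Rv k + sqrt (1 - mu ^ 2) * (cos th * P k + sin th * Q k)))
         0 (2 * PI)).

(* I-hat = w1 A_{R1,nu1} + w2 A_{R2,nu2} + w3 A_{R3,nu3}; for A_{R_i,nu_i} we use the
   orthonormal basis (R_{i+1}, R_{i+2}, R_i) (indices mod 3). *)
Definition Ihat (R1 R2 R3 : vec3) (w1 w2 w3 : R) (nu1 nu2 nu3 : (R -> Prop) -> R)
    (phi : vec3 -> R) : R :=
  w1 * axisym_int R1 R2 R3 nu1 phi + w2 * axisym_int R2 R3 R1 nu2 phi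
  + w3 * axisym_int R3 R1 R2 nu3 phi.

Definition mom0 (I : (vec3 -> R) -> R) : R := I (fun _ => 1).
Definition mom1 (I : (vec3 -> R) -> R) : vec3 := fun a => I (fun O => O a).
Definition mom2 (I : (vec3 -> R) -> R) : nat -> nat -> R :=
  fun a b => I (fun O => O a * O b).

Definition quadf (E : nat -> nat -> R) (v : vec3) : R :=
  sum_f_R0 (fun a => sum_f_R0 (fun b => v a * E a b * v b) 2) 2.

(* Main.v *)
Require Import Defs.
From Stdlib Require Import Reals Lra Lia ClassicalEpsilon FunctionalExtensionality PropExtensionality Classical.
From Coquelicot Require Import Coquelicot.
Open Scope R_scope.

Lemma ex_RInt_ind_dec (F : R -> R) c a b : (forall x y, x <= y -> F y <= F x) -> a <= b ->
  ex_RInt (fun t => if Rle_dec c (F t) then 1 else 0) a b.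
Proof.
  intros Hd Hab.
  destruct (classic (exists t, a <= t <= b /\ c <= F t)) as [Hex|Hno].
  - destruct (completeness (fun t => a <= t <= b /\ c <= F t)) as [tau [Hub Hl]].
    { exists b; intros t Ht; lra. }
    { exact Hex. }
    assert (Ha : a <= tau). { destruct Hex as [t Ht]. pose proof (Hub t Ht); lra. }
    assert (Hb : tau <= b). { apply Hl; intros t Ht; lra. }
    apply ex_RInt_Chasles_0 with tau; [lra| |].
    + apply ex_RInt_ext with (fun _ => 1). 2: apply ex_RInt_const.
      intros x Hx. rewrite Rmin_left, Rmax_right in Hx by lra.
      destruct (Rle_dec c (F x)) as [|Hn]; auto. exfalso.
      assert (exists s, a <= s <= b /\ c <= F s /\ x < s) as [s (Hs1 & Hs2 & Hs3)].
      { apply NNPP; intro Hne. assert (tau <= x). apply Hl. intros s Hs.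
        destruct (Rle_lt_dec s x); auto. exfalso; apply Hne; exists s; tauto. lra. }
      apply Hn. specialize (Hd x s ltac:(lra)). lra.
    + apply ex_RInt_ext with (fun _ => 0). 2: apply ex_RInt_const.
      intros x Hx. rewrite Rmin_left, Rmax_right in Hx by lra.
      destruct (Rle_dec c (F x)) as [Hc|]; auto. exfalso.
      pose proof (Hub x ltac:(split; [lra|auto])). lra.
  - apply ex_RInt_ext with (fun _ => 0). 2: apply ex_RInt_const.
    intros x Hx. rewrite Rmin_left, Rmax_right in Hx by lra.
    destruct (Rle_dec c (F x)) as [Hc|]; auto. exfalso. apply Hno; exists x; split; [lra|auto].
Qed.

Fixpoint cnt (N : nat) (x : R) : R :=
  match N with O => 0 | S N' => cnt N' x + (if Rle_dec (INR N) x then 1 else 0) end.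

Lemma cnt_S N x : cnt (S N) x = cnt N x + (if Rle_dec (INR N + 1) x then 1 else 0).
Proof. rewrite <- S_INR. reflexivity. Qed.

Lemma cnt_bounds N x : 0 <= x ->
  (cnt N x <= x /\ cnt N x <= INR N) /\ (INR N <= x -> cnt N x = INR N) /\ (x < INR N + 1 -> x - 1 < cnt N x).
Proof.
  intro Hx. induction N as [|N IH].
  - simpl. lra.
  - destruct IH as [[H1 H2] [H3 H4]]. rewrite cnt_S, S_INR. pose proof (pos_INR N).
    destruct (Rle_dec (INR N + 1) x) as [Hle|Hlt].
    + rewrite H3 by lra. split; [split|split]; intros; lra.
    + split; [split|split]; intros; try lra.
Qed.

Lemma ex_RInt_cnt (F : R -> R) (n : R) N a b : (forall x y, x <= y -> F y <= F x) -> 0 <= n -> a <= b ->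
  ex_RInt (fun t => cnt N (n * F t)) a b.
Proof.
  intros Hd Hn Hab. induction N as [|N IH].
  - apply (ex_RInt_const (V:=R_NormedModule)) with (v := 0).
  - apply ex_RInt_ext with (fun t => cnt N (n*F t) + (if Rle_dec (INR N + 1) (n * F t) then 1 else 0)). intros; rewrite cnt_S; reflexivity. apply (ex_RInt_plus (V := R_NormedModule)); auto.
    apply (ex_RInt_ind_dec (fun t => n * F t)); auto.
    intros x y Hxy. specialize (Hd x y Hxy). nra.
Qed.

Lemma ex_RInt_dec01 (F : R -> R) a b : (forall x y, x <= y -> F y <= F x) -> (forall x, 0 <= F x <= 1) ->
  ex_RInt F a b.
Proof.
  intros Hd H01.
  assert (Hmain : forall a b, a <= b -> ex_RInt F a b).
  { clear a b. intros a b Hab.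
    set (f := fun (N : nat) t => / INR N * cnt N (INR N * F t)).
    assert (Hf : forall N, is_RInt (f N) a b (RInt (f N) a b)).
    { intro N. apply (RInt_correct (V:=R_CompleteNormedModule)). unfold f.
      apply (ex_RInt_scal (V := R_NormedModule)). apply ex_RInt_cnt; auto. apply pos_INR. }
    destruct (filterlim_RInt f a b eventually eventually_filter F (fun N => RInt (f N) a b) Hf) as [If [_ HI]].
    2: exists If; exact HI.
    intros P [eps HP]. destruct (archimed_cor1 eps (cond_pos eps)) as [N0 [HN0 HN0p]].
    exists N0. intros N HN. apply HP. intro t.
    change (Rabs (f N t - F t) < eps).
    unfold f. assert (HNp : 0 < INR N) by (apply lt_0_INR; lia).
    assert (HNle : INR N0 <= INR N) by (apply le_INR; lia).
    pose proof (H01 t) as [Ht0 Ht1].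
    destruct (cnt_bounds N (INR N * F t)) as [[B1 B2] [_ B4]]. nra.
    specialize (B4 ltac:(nra)).
    assert (/ INR N <= / INR N0) by (apply Rinv_le_contravar; auto; apply lt_0_INR; lia).
    assert (E1 : / INR N * cnt N (INR N * F t) <= F t).
    { apply Rmult_le_reg_l with (INR N); auto. rewrite <- Rmult_assoc, Rinv_r by lra. lra. }
    assert (E2 : F t - / INR N < / INR N * cnt N (INR N * F t)).
    { apply Rmult_lt_reg_l with (INR N); auto. rewrite <- Rmult_assoc, Rinv_r by lra.
      rewrite Rmult_minus_distr_l, Rinv_r by lra. lra. }
    rewrite Rabs_left1 by lra. lra. }
  destruct (Rle_dec a b). auto. apply ex_RInt_swap. apply Hmain; lra.
Qed.
Lemma set_ext (A B : R -> Prop) : (forall x, A x <-> B x) -> A = B.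
Proof. intro H; apply functional_extensionality; intro x; apply propositional_extensionality; apply H. Qed.

Lemma borel_ext A B : (forall x, A x <-> B x) -> borel A -> borel B.
Proof. intros H; rewrite (set_ext A B H); auto. Qed.

Lemma borel_empty : borel (fun _ => False).
Proof. intros S [H _] _; exact H. Qed.

Lemma borel_compl A : borel A -> borel (fun x => ~ A x).
Proof. intros HA S HS Hi; destruct HS as (H0 & H1 & H2); apply H1; apply HA; [split; auto|auto]. Qed.

Lemma borel_cunion (A : nat -> R -> Prop) : (forall n, borel (A n)) -> borel (fun x => exists n, A n x).
Proof. intros HA S HS Hi; pose proof HS as (H0 & H1 & H2); apply H2; intro n; apply HA; auto. Qed.

Lemma borel_int a b : borel (fun x => a < x < b).
Proof. intros S _ Hi; apply Hi. Qed.

Lemma borel_true : borel (fun _ => True).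
Proof. apply borel_ext with (fun x => ~ False); [tauto|]. apply borel_compl, borel_empty. Qed.

Lemma borel_union A B : borel A -> borel B -> borel (fun x => A x \/ B x).
Proof.
  intros HA HB. apply borel_ext with (fun x => exists n, (fun n => match n with O => A | _ => B end) n x).
  - intro x; split. intros [[|n] H]; auto. intros [H|H]; [exists O|exists 1%nat]; auto.
  - apply borel_cunion; intros [|n]; auto.
Qed.

Lemma borel_inter A B : borel A -> borel B -> borel (fun x => A x /\ B x).
Proof.
  intros HA HB. apply borel_ext with (fun x => ~ (~ A x \/ ~ B x)).
  - intro x; tauto.
  - apply borel_compl, borel_union; apply borel_compl; auto.
Qed.

Lemma borel_gt c : borel (fun x => c < x).
Proof.
  apply borel_ext with (fun x => exists n, c < x < c + INR n).
  - intro x; split. intros [n H]; lra. intro H.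
    destruct (INR_archimed 1 (x - c)) as [n Hn]; [lra|]. exists n; lra.
  - apply borel_cunion; intro n; apply borel_int.
Qed.

Lemma borel_lt c : borel (fun x => x < c).
Proof.
  apply borel_ext with (fun x => exists n, c - INR n < x < c).
  - intro x; split. intros [n H]; lra. intro H.
    destruct (INR_archimed 1 (c - x)) as [n Hn]; [lra|]. exists n; lra.
  - apply borel_cunion; intro n; apply borel_int.
Qed.

Lemma borel_ge c : borel (fun x => c <= x).
Proof. apply borel_ext with (fun x => ~ x < c). intro; lra. apply borel_compl, borel_lt. Qed.

Lemma borel_le c : borel (fun x => x <= c).
Proof. apply borel_ext with (fun x => ~ c < x). intro; lra. apply borel_compl, borel_gt. Qed.

Definition I11 (x : R) : Prop := -1 <= x <= 1.

Lemma borel_I11 : borel I11.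
Proof. apply borel_ext with (fun x => -1 <= x /\ x <= 1). unfold I11; tauto. apply borel_inter; [apply borel_ge|apply borel_le]. Qed.

Lemma nu_ext (nu : (R -> Prop) -> R) (A B : R -> Prop) : (forall x, A x <-> B x) -> nu A = nu B.
Proof. intro H; rewrite (set_ext A B H); auto. Qed.

Lemma sum_const c n : sum_f_R0 (fun _ => c) n = (INR n + 1) * c.
Proof. induction n; simpl sum_f_R0. simpl; ring. rewrite IHn, S_INR; ring. Qed.

Lemma nu_empty nu : prob_meas_11 nu -> nu (fun _ => False) = 0.
Proof.
  intro H. pose proof (pm_ctbl_add _ H (fun _ _ => False) (fun _ => borel_empty) ltac:(tauto)) as Hs.
  rewrite (nu_ext nu _ (fun _ => False)) in Hs by (intro x; split; [intros [n Hn]; auto | tauto]). set (c := nu (fun _ => False)) in *.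
  destruct (Req_dec c 0) as [|Hc]; auto. exfalso.
  destruct (Hs (Rabs c)) as [N HN]. apply Rabs_pos_lt; auto.
  specialize (HN (N + 2)%nat ltac:(lia)). unfold R_dist in HN. rewrite sum_const in HN.
  replace ((INR (N + 2) + 1) * c - c) with (INR (N+2) * c) in HN by ring.
  rewrite Rabs_mult, Rabs_right in HN by (apply Rle_ge, pos_INR).
  rewrite plus_INR in HN. simpl in HN. pose proof (pos_INR N). pose proof (Rabs_pos_lt c Hc). nra.
Qed.

Lemma nu_add nu A B : prob_meas_11 nu -> borel A -> borel B -> (forall x, A x -> B x -> False) ->
  nu (fun x => A x \/ B x) = nu A + nu B.
Proof.
  intros H HA HB Hd.
  set (S := fun n : nat => match n with O => A | 1%nat => B | _ => fun _ : R => False end).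
  assert (HS : forall n, borel (S n)). { intros [|[|n]]; simpl; auto using borel_empty. }
  assert (HD : forall n m x, n <> m -> S n x -> S m x -> False).
  { intros [|[|n]] [|[|m]] x Hnm; simpl; try tauto; try (intros; eapply Hd; eauto). }
  pose proof (pm_ctbl_add _ H S HS HD) as Hs.
  rewrite (nu_ext nu (fun x => exists n, S n x) (fun x => A x \/ B x)) in Hs.
  2:{ intro x; split. intros [[|[|n]] Hn]; simpl in Hn; tauto. intros [Hx|Hx]; [exists O|exists 1%nat]; auto. }
  apply (uniqueness_sum (fun n => nu (S n))); auto.
  intros eps Heps. exists 1%nat. intros n Hn. unfold R_dist.
  assert (E : sum_f_R0 (fun n => nu (S n)) n = nu A + nu B).
  { induction n. lia. destruct n. simpl. ring. rewrite tech5, IHn by lia. simpl. rewrite (nu_empty nu H). ring. }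
  rewrite E. rewrite Rminus_diag, Rabs_R0; auto.
Qed.

Lemma nu_mono nu A B : prob_meas_11 nu -> borel A -> borel B -> (forall x, A x -> B x) -> nu A <= nu B.
Proof.
  intros H HA HB Hs.
  rewrite (nu_ext nu B (fun x => A x \/ (B x /\ ~ A x))) by (intro x; specialize (Hs x); tauto).
  rewrite nu_add; auto.
  - pose proof (pm_nonneg _ H (fun x => B x /\ ~ A x)). assert (borel (fun x => B x /\ ~ A x)).
    apply borel_inter; auto; apply borel_compl; auto. specialize (H0 H1). lra.
  - apply borel_inter; auto; apply borel_compl; auto.
  - tauto.
Qed.

Lemma nu_le1 nu A : prob_meas_11 nu -> borel A -> nu A <= 1.
Proof. intros H HA. rewrite <- (pm_total _ H). apply nu_mono; auto using borel_true. Qed.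

Lemma nu_I nu : prob_meas_11 nu -> nu I11 = 1.
Proof.
  intro H. pose proof (pm_total _ H) as T.
  rewrite (nu_ext nu (fun _ => True) (fun x => I11 x \/ (x < -1 \/ 1 < x))) in T.
  2:{ unfold I11; intro x; split; intros; auto; lra. }
  rewrite nu_add, (pm_support _ H) in T; auto using borel_I11.
  lra. apply borel_union; auto using borel_lt, borel_gt. unfold I11; intros; lra.
Qed.

Lemma nu_split nu A : prob_meas_11 nu -> borel A ->
  nu (fun x => I11 x /\ A x) + nu (fun x => I11 x /\ ~ A x) = 1.
Proof.
  intros H HA. rewrite <- nu_add; auto.
  - rewrite <- (nu_I nu H). apply nu_ext. intro x; split. tauto. intro; destruct (classic (A x)); tauto.
  - apply borel_inter; auto using borel_I11.
  - apply borel_inter; auto using borel_I11, borel_compl.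
  - tauto.
Qed.
Lemma RI_cst (a b c : R) : RInt (fun _ => c) a b = (b - a) * c.
Proof. rewrite (RInt_const (V:=R_CompleteNormedModule)). reflexivity. Qed.

Lemma RI_ext_cst (f : R -> R) a b c : (forall x, Rmin a b < x < Rmax a b -> f x = c) -> RInt f a b = (b - a) * c.
Proof. intro H. rewrite (RInt_ext (V:=R_CompleteNormedModule) f (fun _ => c)) by auto. apply RI_cst. Qed.

Lemma RI_chasles (f : R -> R) a b c : ex_RInt f a b -> ex_RInt f b c -> RInt f a b + RInt f b c = RInt f a c.
Proof. intros H1 H2. rewrite <- (RInt_Chasles (V:=R_CompleteNormedModule) f a b c H1 H2). reflexivity. Qed.

Lemma RI_swap (f : R -> R) a b : ex_RInt f a b -> RInt f b a = - RInt f a b.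
Proof. intro H. rewrite <- (opp_RInt_swap (V:=R_CompleteNormedModule) f a b H). reflexivity. Qed.

Lemma RI_lin (f : R -> R) u v a b : ex_RInt f (u * a + v) (u * b + v) ->
  u * RInt (fun t => f (u * t + v)) a b = RInt f (u * a + v) (u * b + v).
Proof.
  intro H. rewrite <- (RInt_comp_lin (V:=R_CompleteNormedModule) f u v a b H).
  rewrite <- (RInt_scal (V:=R_CompleteNormedModule)). reflexivity.
  apply (ex_RInt_comp_lin (V:=R_CompleteNormedModule) f u v a b) in H.
  apply (ex_RInt_scal (V:=R_CompleteNormedModule)) with (k := / u) in H.
  destruct (Req_dec u 0) as [->|Hu].
  - apply ex_RInt_ext with (fun _ => f v). intros; rewrite Rmult_0_l, Rplus_0_l; reflexivity. apply (ex_RInt_const (V:=R_CompleteNormedModule)).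
  - eapply ex_RInt_ext; [|exact H]. intros x _. change (/u * (u * f (u * x + v)) = f (u * x + v)). field; auto.
Qed.

Lemma RI_minus (f g : R -> R) a b : ex_RInt f a b -> ex_RInt g a b ->
  RInt (fun t => f t - g t) a b = RInt f a b - RInt g a b.
Proof. intros H1 H2. pose proof (RInt_minus (V:=R_CompleteNormedModule) f g a b H1 H2) as E. exact E. Qed.

Lemma RI_le (f g : R -> R) a b : a <= b -> ex_RInt f a b -> ex_RInt g a b ->
  (forall x, a < x < b -> f x <= g x) -> RInt f a b <= RInt g a b.
Proof. apply RInt_le. Qed.
Definition nice (g : R -> R) := forall t, borel (fun x => t < g x) /\ borel (fun x => g x < t).
Definition Pg (nu : (R -> Prop) -> R) g t := nu (fun x => I11 x /\ t < g x).
Definition Gg (nu : (R -> Prop) -> R) g t := nu (fun x => I11 x /\ t <= g x).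

Lemma borel_P g t : nice g -> borel (fun x => I11 x /\ t < g x).
Proof. intro Hg. apply borel_inter. apply borel_I11. apply Hg. Qed.

Lemma borel_G g t : nice g -> borel (fun x => I11 x /\ t <= g x).
Proof. intro Hg. apply borel_inter. apply borel_I11.
  apply borel_ext with (fun x => ~ g x < t). intro; lra. apply borel_compl, Hg. Qed.

Lemma Pg_dec nu g : prob_meas_11 nu -> nice g -> forall x y, x <= y -> Pg nu g y <= Pg nu g x.
Proof. intros H Hg x y Hxy. apply nu_mono; auto using borel_P. intros z [Hz1 Hz2]; split; auto; lra. Qed.

Lemma Gg_dec nu g : prob_meas_11 nu -> nice g -> forall x y, x <= y -> Gg nu g y <= Gg nu g x.
Proof. intros H Hg x y Hxy. apply nu_mono; auto using borel_G. intros z [Hz1 Hz2]; split; auto; lra. Qed.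

Lemma Pg_01 nu g : prob_meas_11 nu -> nice g -> forall t, 0 <= Pg nu g t <= 1.
Proof. intros H Hg t. split. apply pm_nonneg; auto using borel_P. apply nu_le1; auto using borel_P. Qed.

Lemma Gg_01 nu g : prob_meas_11 nu -> nice g -> forall t, 0 <= Gg nu g t <= 1.
Proof. intros H Hg t. split. apply pm_nonneg; auto using borel_G. apply nu_le1; auto using borel_G. Qed.

Lemma exP nu g a b : prob_meas_11 nu -> nice g -> ex_RInt (Pg nu g) a b.
Proof. intros H Hg. apply ex_RInt_dec01. apply Pg_dec; auto. apply Pg_01; auto. Qed.

Lemma exG nu g a b : prob_meas_11 nu -> nice g -> ex_RInt (Gg nu g) a b.
Proof. intros H Hg. apply ex_RInt_dec01. apply Gg_dec; auto. apply Gg_01; auto. Qed.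

Lemma P_le_G nu g t : prob_meas_11 nu -> nice g -> Pg nu g t <= Gg nu g t.
Proof. intros H Hg. apply nu_mono; auto using borel_P, borel_G. intros z [Hz1 Hz2]; split; auto; lra. Qed.

Lemma G_le_P nu g s t : prob_meas_11 nu -> nice g -> s < t -> Gg nu g t <= Pg nu g s.
Proof. intros H Hg Hst. apply nu_mono; auto using borel_P, borel_G. intros z [Hz1 Hz2]; split; auto; lra. Qed.

Lemma int_G_P nu g a b : prob_meas_11 nu -> nice g -> a <= b ->
  RInt (Gg nu g) a b = RInt (Pg nu g) a b.
Proof.
  intros H Hg Hab. apply Rle_antisym.
  2:{ apply RI_le; auto using exP, exG. intros; apply P_le_G; auto. }
  apply Rnot_lt_le; intro Hlt.
  set (d := (RInt (Gg nu g) a b - RInt (Pg nu g) a b) / 2).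
  assert (Hd : 0 < d) by (unfold d; lra).
  assert (E1 : RInt (Gg nu g) a b <= RInt (fun u => Pg nu g (1 * u + - d)) a b).
  { apply RI_le; auto using exG.
    - apply ex_RInt_ext with (fun u => / 1 * (1 * Pg nu g (1 * u + - d))).
      intros x _. rewrite Rinv_1, !Rmult_1_l. reflexivity. apply (ex_RInt_scal (V:=R_CompleteNormedModule)).
      apply (ex_RInt_comp_lin (V:=R_CompleteNormedModule)). apply exP; auto.
    - intros x _. apply G_le_P; auto. lra. }
  rewrite <- (Rmult_1_l (RInt (fun u => Pg nu g (1 * u + - d)) a b)) in E1.
  rewrite RI_lin in E1 by (apply exP; auto).
  rewrite <- (RI_chasles _ (1 * a + - d) a) in E1 by (apply exP; auto).
  assert (E2 : RInt (Pg nu g) a (1 * b + - d) + RInt (Pg nu g) (1 * b + - d) b = RInt (Pg nu g) a b)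
    by (apply RI_chasles; apply exP; auto).
  assert (E3 : RInt (Pg nu g) (1 * a + - d) a <= RInt (fun _ => 1) (1 * a + - d) a).
  { apply RI_le; auto using exP. lra. apply (ex_RInt_const (V:=R_CompleteNormedModule)).
    intros; apply Pg_01; auto. }
  assert (E4 : RInt (fun _ => 0) (1 * b + - d) b <= RInt (Pg nu g) (1 * b + - d) b).
  { apply RI_le; auto using exP. lra. apply (ex_RInt_const (V:=R_CompleteNormedModule)).
    intros; apply Pg_01; auto. }
  rewrite RI_cst in E3, E4. unfold d in *. lra.
Qed.

Lemma Rabs_le_inv a b : Rabs a <= b -> - b <= a <= b.
Proof. unfold Rabs; destruct (Rcase_abs a); lra. Qed.

Lemma ex_RI_lin (f : R -> R) u v a b : ex_RInt f (u * a + v) (u * b + v) ->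
  ex_RInt (fun t => f (u * t + v)) a b.
Proof.
  intro H.
  apply (ex_RInt_comp_lin (V:=R_CompleteNormedModule) f u v a b) in H.
  apply (ex_RInt_scal (V:=R_CompleteNormedModule)) with (k := / u) in H.
  destruct (Req_dec u 0) as [->|Hu].
  - apply ex_RInt_ext with (fun _ => f v). intros; rewrite Rmult_0_l, Rplus_0_l; reflexivity. apply (ex_RInt_const (V:=R_CompleteNormedModule)).
  - eapply ex_RInt_ext; [|exact H]. intros x _. change (/u * (u * f (u * x + v)) = f (u * x + v)). field; auto.
Qed.

Definition bnd (g : R -> R) M := 0 <= M /\ forall x, I11 x -> Rabs (g x) <= M.
Definition VV nu g M := RInt (Pg nu g) (-M) M - M.

Lemma P_low nu g M0 t : prob_meas_11 nu -> bnd g M0 -> t < - M0 -> Pg nu g t = 1.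
Proof.
  intros H [_ Hb] Ht. unfold Pg. rewrite <- (nu_I nu H). apply nu_ext. intro x; split. tauto.
  intro Hx; split; auto. specialize (Hb x Hx). apply Rabs_le_inv in Hb. lra.
Qed.

Lemma P_high nu g M0 t : prob_meas_11 nu -> bnd g M0 -> M0 <= t -> Pg nu g t = 0.
Proof.
  intros H [_ Hb] Ht. unfold Pg. rewrite <- (nu_empty nu H). apply nu_ext. intro x; split. 2: tauto.
  intros [Hx Hx2]. specialize (Hb x Hx). apply Rabs_le_inv in Hb. lra.
Qed.

Lemma VV_indep1 nu g B M1 M2 : prob_meas_11 nu -> nice g -> bnd g B -> B <= M1 -> M1 <= M2 ->
  VV nu g M1 = VV nu g M2.
Proof.
  intros H Hg Hb H1 H2. unfold VV.
  rewrite <- (RI_chasles _ (-M2) (-M1) M2) by (apply exP; auto).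
  rewrite <- (RI_chasles _ (-M1) M1 M2) by (apply exP; auto).
  rewrite (RI_ext_cst _ (-M2) (-M1) 1).
  rewrite (RI_ext_cst _ M1 M2 0). lra.
  - intros x Hx. rewrite Rmin_left, Rmax_right in Hx by lra. apply (P_high _ _ B); auto; lra.
  - intros x Hx. rewrite Rmin_left, Rmax_right in Hx by lra. apply (P_low _ _ B); auto; lra.
Qed.

Lemma VV_indep nu g B M1 M2 : prob_meas_11 nu -> nice g -> bnd g B -> B <= M1 -> B <= M2 ->
  VV nu g M1 = VV nu g M2.
Proof.
  intros. destruct (Rle_dec M1 M2). eapply VV_indep1; eauto. symmetry; eapply VV_indep1; eauto; lra.
Qed.

Lemma rint_R f a b : ex_RInt f a b -> rint f a b = RInt f a b.
Proof.
  intro H. unfold rint.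
  destruct (epsilon_spec (inhabits 0) (fun v => exists pr : Riemann_integrable f a b, RiemannInt pr = v)) as [pr Hpr].
  - exists (RiemannInt (ex_RInt_Reals_0 f a b H)). exists (ex_RInt_Reals_0 f a b H). reflexivity.
  - rewrite <- Hpr. symmetry. apply RInt_Reals.
Qed.

Lemma rint_formula nu g M : prob_meas_11 nu -> nice g -> bnd g M ->
  rint (fun t => nu (fun x => -1 <= x <= 1 /\ t < g x)) 0 M
  - rint (fun t => nu (fun x => -1 <= x <= 1 /\ g x < - t)) 0 M = VV nu g M.
Proof.
  intros H Hg [HM Hb].
  change (fun t => nu (fun x => -1 <= x <= 1 /\ t < g x)) with (Pg nu g).
  assert (EN : (fun t => nu (fun x => -1 <= x <= 1 /\ g x < - t)) = (fun t => 1 - Gg nu g (-1 * t + 0))).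
  { apply functional_extensionality; intro t.
    assert (HB : borel (fun x => - t <= g x)).
    { apply borel_ext with (fun x => ~ g x < - t). intro; lra. apply borel_compl, Hg. }
    pose proof (nu_split nu (fun x => - t <= g x) H HB) as S. cbv beta in S.
    rewrite (nu_ext nu (fun x => I11 x /\ ~ - t <= g x) (fun x => -1 <= x <= 1 /\ g x < - t)) in S.
    2:{ intro x; unfold I11; split; intros [h1 h2]; split; auto; lra. }
    unfold Gg. replace (-1 * t + 0) with (- t) by ring. lra. }
  rewrite EN. clear EN.
  assert (exG2 : ex_RInt (fun t => Gg nu g (-1 * t + 0)) 0 M).
  { apply ex_RI_lin. apply exG; auto. }
  rewrite (rint_R (Pg nu g)) by (apply exP; auto).
  rewrite rint_R.
  2:{ apply (ex_RInt_minus (V:=R_CompleteNormedModule)). apply (ex_RInt_const (V:=R_CompleteNormedModule)). exact exG2. }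
  rewrite RI_minus. 2: apply (ex_RInt_const (V:=R_CompleteNormedModule)). 2: exact exG2.
  rewrite RI_cst.
  pose proof (RI_lin (Gg nu g) (-1) 0 0 M (exG _ _ _ _ H Hg)) as L.
  replace (-1 * 0 + 0) with 0 in L by ring. replace (-1 * M + 0) with (- M) in L by ring.
  rewrite (RI_swap (Gg nu g) (-M) 0) in L by (apply exG; auto).
  rewrite (int_G_P nu g (-M) 0 H Hg) in L by lra.
  unfold VV. rewrite <- (RI_chasles _ (-M) 0 M) by (apply exP; auto). lra.
Qed.

Lemma pm_int_VV nu g B M : prob_meas_11 nu -> nice g -> bnd g B -> B <= M -> pm_int nu g = VV nu g M.
Proof.
  intros H Hg Hb HBM. unfold pm_int.
  destruct (epsilon_spec (inhabits 0) (fun v => exists M, 0 <= M /\ (forall x, -1 <= x <= 1 -> Rabs (g x) <= M) /\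
       v = rint (fun t => nu (fun x => -1 <= x <= 1 /\ t < g x)) 0 M
         - rint (fun t => nu (fun x => -1 <= x <= 1 /\ g x < - t)) 0 M)) as [M' [HM' [Hb' Hv]]].
  - exists (rint (fun t => nu (fun x => -1 <= x <= 1 /\ t < g x)) 0 B
         - rint (fun t => nu (fun x => -1 <= x <= 1 /\ g x < - t)) 0 B).
    exists B. destruct Hb. repeat split; auto.
  - rewrite Hv, rint_formula; auto. 2: split; auto.
    apply VV_indep with (Rmin B M'); auto.
    + destruct Hb as [h1 h2]. split. apply Rmin_glb; auto. intros x Hx. apply Rmin_glb; auto.
    + apply Rmin_r.
    + pose proof (Rmin_l B M'). lra.
Qed.
Lemma int_P_gen nu g B L U : prob_meas_11 nu -> nice g -> bnd g B -> L <= - B -> B <= U ->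
  RInt (Pg nu g) L U = pm_int nu g - L.
Proof.
  intros H Hg Hb HL HU. rewrite (pm_int_VV nu g B B) by (auto; lra). unfold VV.
  rewrite <- (RI_chasles _ L (-B) U) by (apply exP; auto).
  rewrite <- (RI_chasles _ (-B) B U) by (apply exP; auto).
  rewrite (RI_ext_cst _ L (-B) 1).
  rewrite (RI_ext_cst _ B U 0). lra.
  - intros x Hx. rewrite Rmin_left, Rmax_right in Hx by lra. apply (P_high _ _ B); auto; lra.
  - intros x Hx. rewrite Rmin_left, Rmax_right in Hx by (destruct Hb; lra). apply (P_low _ _ B); auto; lra.
Qed.

Lemma aff_iff a b t y : a <> 0 ->
  (t < a * y + b <-> (if Rlt_dec a 0 then y < (t - b) / a else (t - b) / a < y)) /\
  (a * y + b < t <-> (if Rlt_dec a 0 then (t - b) / a < y else y < (t - b) / a)).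
Proof.
  intro Ha. set (d := (t - b) / a). assert (E : a * d = t - b) by (unfold d; field; auto).
  destruct (Rlt_dec a 0); split; split; intro h; try nra.
Qed.

Lemma nice_affine g a b : nice g -> nice (fun x => a * g x + b).
Proof.
  intros Hg t. destruct (Req_dec a 0) as [Ha|Ha].
  - subst a. split.
    + destruct (Rlt_dec t b).
      * apply borel_ext with (fun _ => True). intro; split; intros; auto; lra. apply borel_true.
      * apply borel_ext with (fun _ => False). intro; split; intros; [tauto|lra]. apply borel_empty.
    + destruct (Rlt_dec b t).
      * apply borel_ext with (fun _ => True). intro; split; intros; auto; lra. apply borel_true.
      * apply borel_ext with (fun _ => False). intro; split; intros; [tauto|lra]. apply borel_empty.
  - destruct (Rlt_dec a 0) eqn:Ea; split.
    + apply borel_ext with (fun x => g x < (t - b) / a). 2: apply Hg.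
      intro x. destruct (aff_iff a b t (g x) Ha) as [h _]. rewrite Ea in h. tauto.
    + apply borel_ext with (fun x => (t - b) / a < g x). 2: apply Hg.
      intro x. destruct (aff_iff a b t (g x) Ha) as [_ h]. rewrite Ea in h. tauto.
    + apply borel_ext with (fun x => (t - b) / a < g x). 2: apply Hg.
      intro x. destruct (aff_iff a b t (g x) Ha) as [h _]. rewrite Ea in h. tauto.
    + apply borel_ext with (fun x => g x < (t - b) / a). 2: apply Hg.
      intro x. destruct (aff_iff a b t (g x) Ha) as [_ h]. rewrite Ea in h. tauto.
Qed.

Lemma bnd_affine g a b B : bnd g B -> bnd (fun x => a * g x + b) (Rabs a * B + Rabs b).
Proof.
  intros [HB Hb]. split.
  - pose proof (Rabs_pos a); pose proof (Rabs_pos b); nra.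
  - intros x Hx. eapply Rle_trans. apply Rabs_triang. rewrite Rabs_mult.
    pose proof (Hb x Hx). pose proof (Rabs_pos a). apply Rplus_le_compat_r. apply Rmult_le_compat_l; auto.
Qed.

Lemma pm_int_ext nu g h : (forall x, I11 x -> g x = h x) -> pm_int nu g = pm_int nu h.
Proof.
  intro E. unfold pm_int. f_equal.
  apply functional_extensionality; intro v. apply propositional_extensionality.
  assert (E1 : (fun t => nu (fun x => -1 <= x <= 1 /\ t < g x)) = (fun t => nu (fun x => -1 <= x <= 1 /\ t < h x))).
  { apply functional_extensionality; intro t. apply nu_ext. intro x; split; intros [h1 h2]; split; auto;
    [rewrite <- E | rewrite E]; auto. }
  assert (E2 : (fun t => nu (fun x => -1 <= x <= 1 /\ g x < - t)) = (fun t => nu (fun x => -1 <= x <= 1 /\ h x < - t))).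
  { apply functional_extensionality; intro t. apply nu_ext. intro x; split; intros [h1 h2]; split; auto;
    [rewrite <- E | rewrite E]; auto. }
  rewrite E1, E2. split; intros [M [h1 [h2 h3]]]; exists M; repeat split; auto; intros x Hx;
    [rewrite <- E | rewrite E]; auto.
Qed.

Lemma pm_int_const nu c : prob_meas_11 nu -> pm_int nu (fun _ => c) = c.
Proof.
  intro H. assert (Hn : nice (fun _ => c)).
  { intro t. split.
    - destruct (Rlt_dec t c).
      * apply borel_ext with (fun _ => True). intro; split; intros; auto; lra. apply borel_true.
      * apply borel_ext with (fun _ => False). intro; split; intros; [tauto|lra]. apply borel_empty.
    - destruct (Rlt_dec c t).
      * apply borel_ext with (fun _ => True). intro; split; intros; auto; lra. apply borel_true.
      * apply borel_ext with (fun _ => False). intro; split; intros; [tauto|lra]. apply borel_empty. }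
  assert (Hb : bnd (fun _ => c) (Rabs c)). { split. apply Rabs_pos. intros; lra. }
  rewrite (pm_int_VV nu _ (Rabs c) (Rabs c + 1)) by (auto; lra). unfold VV.
  pose proof (Rabs_le_inv c (Rabs c) (Rle_refl _)).
  rewrite <- (RI_chasles _ (-(Rabs c + 1)) c (Rabs c + 1)) by (apply exP; auto).
  rewrite (RI_ext_cst _ (-(Rabs c + 1)) c 1).
  rewrite (RI_ext_cst _ c (Rabs c + 1) 0). lra.
  - intros x Hx. rewrite Rmin_left, Rmax_right in Hx by lra. unfold Pg. rewrite <- (nu_empty nu H).
    apply nu_ext. intro y; split; intros; [lra|tauto].
  - intros x Hx. rewrite Rmin_left, Rmax_right in Hx by lra. unfold Pg. rewrite <- (nu_I nu H).
    apply nu_ext. intro y; split; intros; [tauto|split; auto; lra].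
Qed.

Lemma pm_int_pos nu g a b B : prob_meas_11 nu -> nice g -> bnd g B -> 0 < a ->
  pm_int nu (fun x => a * g x + b) = a * pm_int nu g + b.
Proof.
  intros H Hg Hb Ha. set (M := a * B + Rabs b).
  assert (HbM : bnd (fun x => a * g x + b) M).
  { unfold M. rewrite <- (Rabs_right a) at 1 by lra. apply bnd_affine; auto. }
  rewrite (pm_int_VV nu _ M M) by (auto using nice_affine; lra). unfold VV.
  assert (EP : Pg nu (fun x => a * g x + b) = fun t => Pg nu g (/ a * t + - b / a)).
  { apply functional_extensionality; intro t. unfold Pg. apply nu_ext. intro x.
    replace (/ a * t + - b / a) with ((t - b) / a) by (field; lra).
    destruct (aff_iff a b t (g x)) as [h _]. lra. destruct (Rlt_dec a 0). lra. tauto. }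
  rewrite EP.
  assert (L := RI_lin (Pg nu g) (/ a) (- b / a) (- M) M (exP _ _ _ _ H Hg)).
  rewrite (int_P_gen nu g B) in L; auto.
  - apply (Rmult_eq_compat_l a) in L. rewrite <- Rmult_assoc, Rinv_r in L by lra.
    rewrite Rmult_1_l in L. rewrite L. unfold M. field. lra.
  - destruct Hb as [HB _]. pose proof (Rabs_le_inv b (Rabs b) (Rle_refl _)).
    apply Rmult_le_reg_l with a; auto. replace (a * (/ a * - M + - b / a)) with (- M - b) by (field; lra).
    unfold M; nra.
  - destruct Hb as [HB _]. pose proof (Rabs_le_inv b (Rabs b) (Rle_refl _)).
    apply Rmult_le_reg_l with a; auto. replace (a * (/ a * M + - b / a)) with (M - b) by (field; lra).
    unfold M; nra.
Qed.

Lemma pm_int_neg nu g B : prob_meas_11 nu -> nice g -> bnd g B ->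
  pm_int nu (fun x => - g x) = - pm_int nu g.
Proof.
  intros H Hg Hb.
  assert (Hn : nice (fun x => - g x)).
  { intro t. destruct (nice_affine g (-1) 0 Hg t) as [h1 h2]. split.
    - eapply borel_ext; [|exact h1]. intro; simpl; lra.
    - eapply borel_ext; [|exact h2]. intro; simpl; lra. }
  assert (Hb' : bnd (fun x => - g x) B).
  { destruct Hb as [h1 h2]; split; auto; intros x Hx. rewrite Rabs_Ropp; auto. }
  rewrite (pm_int_VV nu _ B B) by (auto; lra). unfold VV.
  assert (EP : Pg nu (fun x => - g x) = fun t => 1 - Gg nu g (-1 * t + 0)).
  { apply functional_extensionality; intro t.
    assert (HB : borel (fun x => - t <= g x)).
    { apply borel_ext with (fun x => ~ g x < - t). intro; lra. apply borel_compl, Hg. }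
    pose proof (nu_split nu (fun x => - t <= g x) H HB) as S. cbv beta in S.
    rewrite (nu_ext nu (fun x => I11 x /\ ~ - t <= g x) (fun x => I11 x /\ t < - g x)) in S.
    2:{ intro x; split; intros [h1 h2]; split; auto; lra. }
    unfold Gg, Pg. replace (-1 * t + 0) with (- t) by ring. lra. }
  rewrite EP.
  assert (exG2 : ex_RInt (fun t => Gg nu g (-1 * t + 0)) (-B) B).
  { apply ex_RI_lin. apply exG; auto. }
  rewrite RI_minus. 2: apply (ex_RInt_const (V:=R_CompleteNormedModule)). 2: exact exG2.
  rewrite RI_cst.
  pose proof (RI_lin (Gg nu g) (-1) 0 (-B) B (exG _ _ _ _ H Hg)) as L.
  replace (-1 * - B + 0) with B in L by ring. replace (-1 * B + 0) with (- B) in L by ring.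
  rewrite (RI_swap (Gg nu g) (-B) B) in L by (apply exG; auto).
  destruct Hb as [HB0 Hb0].
  rewrite (int_G_P nu g (-B) B H Hg) in L by lra.
  rewrite (int_P_gen nu g B (-B) B) in L; auto; try lra. split; auto.
Qed.

Lemma pm_int_affine nu g a b B : prob_meas_11 nu -> nice g -> bnd g B ->
  pm_int nu (fun x => a * g x + b) = a * pm_int nu g + b.
Proof.
  intros H Hg Hb. destruct (Rtotal_order a 0) as [Ha|[Ha|Ha]].
  - assert (Hn : nice (fun x => - g x)).
    { intro t. destruct (nice_affine g (-1) 0 Hg t) as [h1 h2]. split.
      - eapply borel_ext; [|exact h1]. intro; simpl; lra.
      - eapply borel_ext; [|exact h2]. intro; simpl; lra. }
    assert (Hb' : bnd (fun x => - g x) B).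
    { destruct Hb as [h1 h2]; split; auto; intros x Hx. rewrite Rabs_Ropp; auto. }
    rewrite (pm_int_ext nu _ (fun x => (- a) * (fun y => - g y) x + b)) by (intros; simpl; ring).
    rewrite (pm_int_pos nu _ (-a) b B) by (auto; lra).
    rewrite (pm_int_neg nu g B) by auto. ring.
  - subst a. rewrite (pm_int_ext nu _ (fun _ => b)) by (intros; ring). rewrite pm_int_const; auto. ring.
  - apply pm_int_pos with B; auto.
Qed.

Lemma pm_int_mono nu g h Bg Bh : prob_meas_11 nu -> nice g -> nice h -> bnd g Bg -> bnd h Bh ->
  (forall x, I11 x -> g x <= h x) -> pm_int nu g <= pm_int nu h.
Proof.
  intros H Hg Hh Hbg Hbh Hle.
  destruct Hbg as [Hg0 Hbg']. destruct Hbh as [Hh0 Hbh'].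
  rewrite (pm_int_VV nu g Bg (Bg + Bh)) by (auto; try split; auto; lra).
  rewrite (pm_int_VV nu h Bh (Bg + Bh)) by (auto; try split; auto; lra).
  unfold VV. apply Rplus_le_compat_r. apply RI_le; auto using exP. lra.
  intros t _. apply nu_mono; auto using borel_P. intros x [h1 h2]. split; auto. specialize (Hle x h1). lra.
Qed.
Lemma trig_is A B C D E F :
  is_RInt (fun th => A + B * cos th + C * sin th + D * (cos th * cos th) + E * (sin th * sin th) + F * (cos th * sin th))
    0 (2 * PI) (2 * PI * A + PI * (D + E)).
Proof.
  set (G := fun t => A * t + B * sin t - C * cos t + D * ((t + sin t * cos t) / 2) + E * ((t - sin t * cos t) / 2)
                     + F * (sin t * sin t / 2)).
  replace (2 * PI * A + PI * (D + E)) with (minus (G (2 * PI)) (G 0)).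
  - apply (is_RInt_derive (V:=R_CompleteNormedModule)).
    + intros x _. unfold G. auto_derive; auto.
      assert (Hs : sin x * sin x = 1 - cos x * cos x) by (pose proof (sin2_cos2 x); unfold Rsqr in *; lra).
      replace (sin x * (1 * - sin x)) with (- (1 - cos x * cos x)) by (rewrite <- Hs; ring). rewrite Hs. field.
    + intros x _. apply (ex_derive_continuous (K:=R_AbsRing) (V:=R_NormedModule)). auto_derive; auto.
  - unfold G, minus, plus, opp; simpl. rewrite sin_2PI, cos_2PI, sin_0, cos_0. field.
Qed.

Lemma trig_rint A B C D E F :
  rint (fun th => A + B * cos th + C * sin th + D * (cos th * cos th) + E * (sin th * sin th) + F * (cos th * sin th))
    0 (2 * PI) = 2 * PI * A + PI * (D + E).
Proof.
  pose proof (trig_is A B C D E F) as H.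
  rewrite rint_R by (eexists; exact H).
  apply is_RInt_unique. exact H.
Qed.

Lemma nice_const c : nice (fun _ => c).
Proof.
  intro t. split.
    - destruct (Rlt_dec t c).
      * apply borel_ext with (fun _ => True). intro; split; intros; auto; lra. apply borel_true.
      * apply borel_ext with (fun _ => False). intro; split; intros; [tauto|lra]. apply borel_empty.
    - destruct (Rlt_dec c t).
      * apply borel_ext with (fun _ => True). intro; split; intros; auto; lra. apply borel_true.
      * apply borel_ext with (fun _ => False). intro; split; intros; [tauto|lra]. apply borel_empty.
Qed.

Lemma nice_id : nice (fun x => x).
Proof. intro t; split; [apply borel_gt|apply borel_lt]. Qed.

Lemma nice_sq : nice (fun x => x * x).
Proof.
  intro t. destruct (Rle_dec 0 t) as [Ht|Ht].
  - set (r := sqrt t). assert (Hr : r * r = t) by (apply sqrt_sqrt; lra).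
    assert (Hr0 : 0 <= r) by (apply sqrt_pos).
    split.
    + apply borel_ext with (fun x => ~ (-r <= x /\ x <= r)).
      * intro x; split. 2:{ intros h [h1 h2]. nra. } intro h.
        apply Rnot_le_lt; intro h'. apply h. split.
        -- apply Rnot_lt_le; intro. nra.
        -- apply Rnot_lt_le; intro. nra.
      * apply borel_compl, borel_inter; [apply borel_ge|apply borel_le].
    + apply borel_ext with (fun x => -r < x < r). 2: apply borel_int.
      intro x; split; intro h. nra. split; apply Rnot_le_lt; intro; nra.
  - apply Rnot_le_lt in Ht. split.
    + apply borel_ext with (fun _ => True). 2: apply borel_true. intro x; split; auto; intro; nra.
    + apply borel_ext with (fun _ => False). 2: apply borel_empty. intro x; split; [tauto|intro; nra].
Qed.

Lemma bnd_id : bnd (fun x => x) 1.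
Proof. split. lra. intros x Hx. unfold I11 in Hx. apply Rabs_le; lra. Qed.

Lemma bnd_sq : bnd (fun x => x * x) 1.
Proof. split. lra. intros x Hx. unfold I11 in Hx. apply Rabs_le; nra. Qed.

Definition mm nu := pm_int nu (fun x => x).
Definition ss nu := pm_int nu (fun x => x * x).

Lemma mm_aff nu a b : prob_meas_11 nu -> pm_int nu (fun x => a * x + b) = a * mm nu + b.
Proof. intro H. apply (pm_int_affine nu (fun x => x) a b 1); auto using nice_id, bnd_id. Qed.

Lemma ss_aff nu a b : prob_meas_11 nu -> pm_int nu (fun x => a * (x * x) + b) = a * ss nu + b.
Proof. intro H. apply (pm_int_affine nu (fun x => x * x) a b 1); auto using nice_sq, bnd_sq. Qed.

Lemma ss_le1 nu : prob_meas_11 nu -> ss nu <= 1.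
Proof.
  intro H. rewrite <- (pm_int_const nu 1 H). unfold ss.
  apply (pm_int_mono nu _ _ 1 1); auto using nice_sq, bnd_sq.
  - apply nice_const.
  - split. lra. intros. rewrite Rabs_R1. lra.
  - intros x Hx; unfold I11 in Hx; nra.
Qed.

Lemma mm_sq_le nu : prob_meas_11 nu -> mm nu * mm nu <= ss nu.
Proof.
  intro H. set (m := mm nu).
  assert (E : pm_int nu (fun x => (2 * m) * x + (- (m * m))) = m * m) by (rewrite mm_aff; auto; unfold m; ring).
  rewrite <- E. unfold ss.
  apply (pm_int_mono nu _ _ (Rabs (2 * m) * 1 + Rabs (- (m * m))) 1); auto using nice_sq, bnd_sq.
  - apply nice_affine, nice_id.
  - apply bnd_affine, bnd_id.
  - intros x _. pose proof (Rle_0_sqr (x - m)) as Hq. unfold Rsqr in Hq. lra.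
Qed.

Lemma ax0 Rv P Q nu : prob_meas_11 nu -> axisym_int Rv P Q nu (fun _ => 1) = 1.
Proof.
  intro H. unfold axisym_int.
  rewrite (pm_int_ext nu _ (fun _ => 1)). apply pm_int_const; auto.
  intros x _. pose proof (trig_rint 1 0 0 0 0 0) as T.
  rewrite (functional_extensionality (fun th => 1 + 0 * cos th + 0 * sin th + 0 * (cos th * cos th) + 0 * (sin th * sin th) + 0 * (cos th * sin th)) (fun _ => 1)) in T by (intro; ring).
  rewrite T. field. apply PI_neq0.
Qed.

Lemma ax1 Rv P Q nu a : prob_meas_11 nu -> axisym_int Rv P Q nu (fun O => O a) = Rv a * mm nu.
Proof.
  intro H. unfold axisym_int.
  rewrite (pm_int_ext nu _ (fun x => Rv a * x + 0)). rewrite mm_aff; auto; ring.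
  intros x _. cbv beta.
  pose proof (trig_rint (x * Rv a) (sqrt (1 - x ^ 2) * P a) (sqrt (1 - x ^ 2) * Q a) 0 0 0) as T.
  rewrite (functional_extensionality (fun th => x * Rv a + sqrt (1 - x ^ 2) * P a * cos th + sqrt (1 - x ^ 2) * Q a * sin th + 0 * (cos th * cos th) + 0 * (sin th * sin th) + 0 * (cos th * sin th))
     (fun th => x * Rv a + sqrt (1 - x ^ 2) * (cos th * P a + sin th * Q a))) in T by (intro; ring).
  rewrite T. field. apply PI_neq0.
Qed.

Lemma ax2 Rv P Q nu a b : prob_meas_11 nu -> axisym_int Rv P Q nu (fun O => O a * O b) =
  (Rv a * Rv b - (P a * P b + Q a * Q b) / 2) * ss nu + (P a * P b + Q a * Q b) / 2.
Proof.
  intro H. unfold axisym_int.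
  rewrite (pm_int_ext nu _ (fun x => (Rv a * Rv b - (P a * P b + Q a * Q b) / 2) * (x * x) + (P a * P b + Q a * Q b) / 2)).
  apply ss_aff; auto.
  intros x Hx. cbv beta. set (r := sqrt (1 - x ^ 2)).
  assert (Hr : r * r = 1 - x * x) by (unfold r; rewrite sqrt_sqrt; [ring|unfold I11 in Hx; nra]).
  pose proof (trig_rint (x * x * Rv a * Rv b) (x * r * (Rv a * P b + P a * Rv b)) (x * r * (Rv a * Q b + Q a * Rv b))
     (r * r * P a * P b) (r * r * Q a * Q b) (r * r * (P a * Q b + Q a * P b))) as T.
  rewrite (functional_extensionality (fun th => x * x * Rv a * Rv b + x * r * (Rv a * P b + P a * Rv b) * cos th + x * r * (Rv a * Q b + Q a * Rv b) * sin th + r * r * P a * P b * (cos th * cos th) + r * r * Q a * Q b * (sin th * sin th) + r * r * (P a * Q b + Q a * P b) * (cos th * sin th))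
     (fun th => (x * Rv a + r * (cos th * P a + sin th * Q a)) * (x * Rv b + r * (cos th * P b + sin th * Q b)))) in T by (intro; ring).
  rewrite T. rewrite Hr. field. apply PI_neq0.
Qed.
Lemma Tnonneg m s b c d : m * m <= s -> s <= 1 ->
  0 <= (1 - b * m) ^ 2 + b ^ 2 * (s - m * m) + (1 - s) * (c ^ 2 + d ^ 2) / 2.
Proof.
  intros. pose proof (pow2_ge_0 b). pose proof (pow2_ge_0 c). pose proof (pow2_ge_0 d). pose proof (pow2_ge_0 (1 - b * m)). assert (0 <= c^2 + d^2) by lra.
  assert (0 <= b ^ 2 * (s - m * m)) by (apply Rmult_le_pos; lra).
  assert (0 <= (1 - s) * (c ^ 2 + d ^ 2)) by (apply Rmult_le_pos; lra). lra.
Qed.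

Lemma Tzero m s b c d : m * m <= s -> s <= 1 ->
  (1 - b * m) ^ 2 + b ^ 2 * (s - m * m) + (1 - s) * (c ^ 2 + d ^ 2) / 2 = 0 ->
  b * m = 1 /\ s = m * m /\ (s = 1 \/ (c = 0 /\ d = 0)).
Proof.
  intros H1 H2 H.
  pose proof (pow2_ge_0 b). pose proof (pow2_ge_0 c). pose proof (pow2_ge_0 d). pose proof (pow2_ge_0 (1 - b * m)). assert (0 <= c^2 + d^2) by lra.
  assert (0 <= b ^ 2 * (s - m * m)) by (apply Rmult_le_pos; lra).
  assert (0 <= (1 - s) * (c ^ 2 + d ^ 2)) by (apply Rmult_le_pos; lra).
  assert (P1 : (1 - b * m) ^ 2 = 0) by nra.
  assert (P2 : b ^ 2 * (s - m * m) = 0) by nra.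
  assert (P3 : (1 - s) * (c ^ 2 + d ^ 2) = 0) by nra.
  assert (Hb : b * m = 1) by nra.
  split; auto. split.
  - assert (b <> 0) by (intro; subst; lra).
    assert (b ^ 2 <> 0) by (apply pow_nonzero; auto).
    apply Rmult_integral in P2. destruct P2; [contradiction|lra].
  - apply Rmult_integral in P3. destruct P3 as [P3|P3]. left; lra. right; split; nra.
Qed.

Lemma caseA w1 w2 w3 m1 m2 m3 s1 s2 s3 l1 l2 l3 F1 F2 F3 E0 :
  0 < w1 -> 0 <= w2 -> 0 <= w3 ->
  l1 = w1 * s1 + w2 * (1 - s2) / 2 + w3 * (1 - s3) / 2 ->
  l2 = w2 * s2 + w1 * (1 - s1) / 2 + w3 * (1 - s3) / 2 ->
  l3 = w3 * s3 + w1 * (1 - s1) / 2 + w2 * (1 - s2) / 2 ->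
  F1 = w1 * m1 -> F2 = w2 * m2 -> F3 = w3 * m3 -> E0 = w1 + w2 + w3 ->
  0 < l2 -> 0 < l3 -> s1 = m1 * m1 ->
  F2 / l2 = 0 -> F3 / l3 = 0 ->
  (w2 = 0 \/ F2 / l2 * m2 = 1) -> (w3 = 0 \/ F3 / l3 * m3 = 1) ->
  l1 = F1 ^ 2 / E0 /\ l2 = l3 /\ F2 = 0 /\ F3 = 0.
Proof.
  intros Hw1 Hw2 Hw3 El1 El2 El3 EF1 EF2 EF3 EE0 Hl2 Hl3 Hs1 Hb2 Hb3 H2 H3.
  assert (F2z : F2 = 0). { replace F2 with (F2 / l2 * l2) by (field; lra). rewrite Hb2; ring. }
  assert (F3z : F3 = 0). { replace F3 with (F3 / l3 * l3) by (field; lra). rewrite Hb3; ring. }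
  assert (w2 = 0) by (destruct H2 as [h|h]; auto; rewrite Hb2 in h; lra).
  assert (w3 = 0) by (destruct H3 as [h|h]; auto; rewrite Hb3 in h; lra).
  subst. split. field; lra. split. lra. split; ring.
Qed.

Lemma final_alg w1 w2 w3 m1 m2 m3 s1 s2 s3 l1 l2 l3 F1 F2 F3 E0 :
  0 <= w1 -> 0 <= w2 -> 0 <= w3 ->
  m1 * m1 <= s1 -> s1 <= 1 -> m2 * m2 <= s2 -> s2 <= 1 -> m3 * m3 <= s3 -> s3 <= 1 ->
  l1 = w1 * s1 + w2 * (1 - s2) / 2 + w3 * (1 - s3) / 2 ->
  l2 = w2 * s2 + w1 * (1 - s1) / 2 + w3 * (1 - s3) / 2 ->
  l3 = w3 * s3 + w1 * (1 - s1) / 2 + w2 * (1 - s2) / 2 ->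
  F1 = w1 * m1 -> F2 = w2 * m2 -> F3 = w3 * m3 -> E0 = w1 + w2 + w3 ->
  0 < l1 -> 0 < l2 -> 0 < l3 ->
  F1 ^ 2 / l1 + F2 ^ 2 / l2 + F3 ^ 2 / l3 = E0 ->
  ((l1 = F1 ^ 2 / E0 /\ l2 = l3 /\ F2 = 0 /\ F3 = 0) \/
   (l2 = F2 ^ 2 / E0 /\ l1 = l3 /\ F1 = 0 /\ F3 = 0) \/
   (l3 = F3 ^ 2 / E0 /\ l1 = l2 /\ F1 = 0 /\ F2 = 0)) \/
  (Rabs F1 = l1 /\ Rabs F2 = l2 /\ Rabs F3 = l3).
Proof.
  intros Hw1 Hw2 Hw3 Hm1 Hs1 Hm2 Hs2 Hm3 Hs3 El1 El2 El3 EF1 EF2 EF3 EE0 Hl1 Hl2 Hl3 Heq.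
  set (b1 := F1 / l1). set (b2 := F2 / l2). set (b3 := F3 / l3).
  set (T1 := (1 - b1 * m1) ^ 2 + b1 ^ 2 * (s1 - m1 * m1) + (1 - s1) * (b2 ^ 2 + b3 ^ 2) / 2).
  set (T2 := (1 - b2 * m2) ^ 2 + b2 ^ 2 * (s2 - m2 * m2) + (1 - s2) * (b3 ^ 2 + b1 ^ 2) / 2).
  set (T3 := (1 - b3 * m3) ^ 2 + b3 ^ 2 * (s3 - m3 * m3) + (1 - s3) * (b1 ^ 2 + b2 ^ 2) / 2).
  assert (Hsum : w1 * T1 + w2 * T2 + w3 * T3 = 0).
  { transitivity (E0 - (F1 ^ 2 / l1 + F2 ^ 2 / l2 + F3 ^ 2 / l3)); [|lra].
    unfold T1, T2, T3, b1, b2, b3. rewrite EE0. rewrite El1, El2, El3 in *. rewrite EF1, EF2, EF3.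
    field. lra. }
  assert (N1 : 0 <= T1) by (apply Tnonneg; auto).
  assert (N2 : 0 <= T2) by (apply Tnonneg; auto).
  assert (N3 : 0 <= T3) by (apply Tnonneg; auto).
  assert (Z1 : w1 * T1 = 0) by nra.
  assert (Z2 : w2 * T2 = 0) by nra.
  assert (Z3 : w3 * T3 = 0) by nra.
  assert (C1 : w1 = 0 \/ 0 < w1 /\ (b1 * m1 = 1 /\ s1 = m1 * m1 /\ (s1 = 1 \/ (b2 = 0 /\ b3 = 0)))).
  { destruct (Rle_lt_or_eq_dec 0 w1 Hw1) as [h|h]; [right|left; auto]. split; auto.
    apply Tzero; auto. apply Rmult_integral in Z1; destruct Z1; auto; lra. }
  assert (C2 : w2 = 0 \/ 0 < w2 /\ (b2 * m2 = 1 /\ s2 = m2 * m2 /\ (s2 = 1 \/ (b3 = 0 /\ b1 = 0)))).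
  { destruct (Rle_lt_or_eq_dec 0 w2 Hw2) as [h|h]; [right|left; auto]. split; auto.
    apply Tzero; auto. apply Rmult_integral in Z2; destruct Z2; auto; lra. }
  assert (C3 : w3 = 0 \/ 0 < w3 /\ (b3 * m3 = 1 /\ s3 = m3 * m3 /\ (s3 = 1 \/ (b1 = 0 /\ b2 = 0)))).
  { destruct (Rle_lt_or_eq_dec 0 w3 Hw3) as [h|h]; [right|left; auto]. split; auto.
    apply Tzero; auto. apply Rmult_integral in Z3; destruct Z3; auto; lra. }
  assert (D1 : w1 = 0 \/ b1 * m1 = 1) by (destruct C1 as [h|h]; [left|right]; tauto).
  assert (D2 : w2 = 0 \/ b2 * m2 = 1) by (destruct C2 as [h|h]; [left|right]; tauto).
  assert (D3 : w3 = 0 \/ b3 * m3 = 1) by (destruct C3 as [h|h]; [left|right]; tauto).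
  destruct C1 as [W1|[P1 [_ [S1 [S1'|[B2 B3]]]]]].
  3:{ left; left. apply (caseA w1 w2 w3 m1 m2 m3 s1 s2 s3); auto. }
  all: destruct C2 as [W2|[P2 [_ [S2 [S2'|[B3' B1']]]]]].
  all: try (left; right; left;
      destruct (caseA w2 w1 w3 m2 m1 m3 s2 s1 s3 l2 l1 l3 F2 F1 F3 E0 P2 Hw1 Hw3 ltac:(lra) ltac:(lra) ltac:(lra) EF2 EF1 EF3 ltac:(lra) Hl1 Hl3 S2 B1' B3' D1 D3) as (a1&a2&a3&a4);
      repeat split; auto; lra).
  all: destruct C3 as [W3|[P3 [_ [S3 [S3'|[B1'' B2'']]]]]].
  all: try (left; right; right;
      destruct (caseA w3 w1 w2 m3 m1 m2 s3 s1 s2 l3 l1 l2 F3 F1 F2 E0 P3 Hw1 Hw2 ltac:(lra) ltac:(lra) ltac:(lra) EF3 EF1 EF2 ltac:(lra) Hl1 Hl2 S3 B1'' B2'' D1 D2) as (a1&a2&a3&a4);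
      repeat split; auto; lra).
  all: try (exfalso; subst; nra).
  right. rewrite EF1, EF2, EF3.
  assert (m1 * m1 = 1) by lra. assert (m2 * m2 = 1) by lra. assert (m3 * m3 = 1) by lra.
  rewrite El1, El2, El3, S1', S2', S3'.
  rewrite !Rabs_mult, !(Rabs_right w1), !(Rabs_right w2), !(Rabs_right w3) by lra.
  assert (Rabs m1 = 1). { destruct (Rcase_abs m1); [rewrite Rabs_left|rewrite Rabs_right]; nra. }
  assert (Rabs m2 = 1). { destruct (Rcase_abs m2); [rewrite Rabs_left|rewrite Rabs_right]; nra. }
  assert (Rabs m3 = 1). { destruct (Rcase_abs m3); [rewrite Rabs_left|rewrite Rabs_right]; nra. }
  repeat split; nra.
Qed.

Theorem mainTheorem6
  (R1 R2 R3 : vec3) (w1 w2 w3 : R) (nu1 nu2 nu3 : (R -> Prop) -> R)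
  (hR1 : dot R1 R1 = 1) (hR2 : dot R2 R2 = 1) (hR3 : dot R3 R3 = 1)
  (h12 : dot R1 R2 = 0) (h13 : dot R1 R3 = 0) (h23 : dot R2 R3 = 0)
  (hw1 : 0 <= w1) (hw2 : 0 <= w2) (hw3 : 0 <= w3)
  (hnu1 : prob_meas_11 nu1) (hnu2 : prob_meas_11 nu2) (hnu3 : prob_meas_11 nu3) :
  let I := Ihat R1 R2 R3 w1 w2 w3 nu1 nu2 nu3 in
  let E0 := mom0 I in
  let E1 := mom1 I in
  let E2 := mom2 I in
  let l1 := quadf E2 R1 in let l2 := quadf E2 R2 in let l3 := quadf E2 R3 in
  let F1 := dot E1 R1 in let F2 := dot E1 R2 in let F3 := dot E1 R3 in
  0 < l1 -> 0 < l2 -> 0 < l3 ->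
  F1 ^ 2 / l1 + F2 ^ 2 / l2 + F3 ^ 2 / l3 = E0 ->
  ((l1 = F1 ^ 2 / E0 /\ l2 = l3 /\ F2 = 0 /\ F3 = 0) \/
   (l2 = F2 ^ 2 / E0 /\ l1 = l3 /\ F1 = 0 /\ F3 = 0) \/
   (l3 = F3 ^ 2 / E0 /\ l1 = l2 /\ F1 = 0 /\ F2 = 0)) \/
  (Rabs F1 = l1 /\ Rabs F2 = l2 /\ Rabs F3 = l3).
Proof.
  intros I E0 E1 E2 l1 l2 l3 F1 F2 F3.
  set (m1 := mm nu1). set (m2 := mm nu2). set (m3 := mm nu3).
  set (s1 := ss nu1). set (s2 := ss nu2). set (s3 := ss nu3).
  assert (HE0 : E0 = w1 + w2 + w3).
  { unfold E0, I, mom0, Ihat. rewrite !ax0; auto. ring. }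
  assert (HE1 : forall k, E1 k = w1 * (R1 k * m1) + w2 * (R2 k * m2) + w3 * (R3 k * m3)).
  { intro k. unfold E1, I, mom1, Ihat. rewrite !ax1; auto. }
  assert (HE2 : forall a b, E2 a b =
     w1 * ((R1 a * R1 b - (R2 a * R2 b + R3 a * R3 b) / 2) * s1 + (R2 a * R2 b + R3 a * R3 b) / 2)
   + w2 * ((R2 a * R2 b - (R3 a * R3 b + R1 a * R1 b) / 2) * s2 + (R3 a * R3 b + R1 a * R1 b) / 2)
   + w3 * ((R3 a * R3 b - (R1 a * R1 b + R2 a * R2 b) / 2) * s3 + (R1 a * R1 b + R2 a * R2 b) / 2)).
  { intros a b. unfold E2, I, mom2, Ihat. rewrite !ax2; auto. }
  assert (HF : forall v, dot E1 v = w1 * m1 * dot R1 v + w2 * m2 * dot R2 v + w3 * m3 * dot R3 v).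
  { intro v. unfold dot. rewrite !HE1. ring. }
  assert (HL : forall v, quadf E2 v =
      w1 * ((dot R1 v ^ 2 - (dot R2 v ^ 2 + dot R3 v ^ 2) / 2) * s1 + (dot R2 v ^ 2 + dot R3 v ^ 2) / 2)
    + w2 * ((dot R2 v ^ 2 - (dot R3 v ^ 2 + dot R1 v ^ 2) / 2) * s2 + (dot R3 v ^ 2 + dot R1 v ^ 2) / 2)
    + w3 * ((dot R3 v ^ 2 - (dot R1 v ^ 2 + dot R2 v ^ 2) / 2) * s3 + (dot R1 v ^ 2 + dot R2 v ^ 2) / 2)).
  { intro v. unfold quadf. simpl sum_f_R0. rewrite !HE2. unfold dot, Rdiv. ring. }
  assert (dsym : forall u v, dot u v = dot v u) by (intros; unfold dot; ring).
  assert (HF1 : F1 = w1 * m1) by (unfold F1; rewrite HF, hR1, (dsym R2 R1), h12, (dsym R3 R1), h13; ring).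
  assert (HF2 : F2 = w2 * m2) by (unfold F2; rewrite HF, hR2, h12, (dsym R3 R2), h23; ring).
  assert (HF3 : F3 = w3 * m3) by (unfold F3; rewrite HF, hR3, h13, h23; ring).
  assert (HL1 : l1 = w1 * s1 + w2 * (1 - s2) / 2 + w3 * (1 - s3) / 2)
    by (unfold l1; rewrite HL, hR1, (dsym R2 R1), h12, (dsym R3 R1), h13; field).
  assert (HL2 : l2 = w2 * s2 + w1 * (1 - s1) / 2 + w3 * (1 - s3) / 2)
    by (unfold l2; rewrite HL, hR2, h12, (dsym R3 R2), h23; field).
  assert (HL3 : l3 = w3 * s3 + w1 * (1 - s1) / 2 + w2 * (1 - s2) / 2)
    by (unfold l3; rewrite HL, hR3, h13, h23; field).
  intros Hl1 Hl2 Hl3 Heq.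
  apply (final_alg w1 w2 w3 m1 m2 m3 s1 s2 s3); auto;
    unfold m1, m2, m3, s1, s2, s3; auto using mm_sq_le, ss_le1.
Qed.
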